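(* Let $n$ be a positive integer with $n\equiv 4\pmod 6$ and let $t=\lfloor n/3\rfloor$. Then the collection of subgroups of $S_n$ consisting of: all stabilizers of partitions of $\{1,\dots,n\}$ into two blocks of size $n/2$; $A_n$; and, for every $i$ with $1\le i\le t$ and $i\neq t-1$, all setwise stabilizers of $i$-element subsets of $\{1,\dots,n\}$, is a cover of $S_n$. In other words, the subgroups $S_{t-1}\times S_{n-t+1}$ can be removed from the cover consisting of all subgroups $S_{n/2}\wr S_2$, $A_n$, and $S_i\times S_{n-i}$ ($1\le i\le t$) while still covering $S_n$.
   Context: $S_n$ is the symmetric group on $\{1,\dots,n\}$. The stabilizer of a partition $\{B_1,B_2\}$ is the set of $g$ with $\{B_1^g,B_2^g\}=\{B_1,B_2\}$ (isomorphic to $S_{n/2}\wr S_2$); the setwise stabilizer of an $i$-subset is isomorphic to $S_i\times S_{n-i}$. A cover of a group is a collection of proper subgroups whose union is the group. *)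

(* Defs.v *)
From HB Require Import structures.
From mathcomp Require Import all_boot all_fingroup all_solvable.
Set Implicit Arguments. Unset Strict Implicit. Unset Printing Implicit Defensive.
Local Open Scope group_scope.

Definition is_cover (gT : finGroupType) (G : {set gT}) (C : {set {set gT}}) : bool :=
  [forall H in C, group_set H && (H \proper G)] && (\bigcup_(H in C) H == G).

Definition setstab (T : finType) (B : {set T}) : {set {perm T}} :=
  [set g : {perm T} | (fun x => g x) @: B == B].

Definition partstab (T : finType) (P : {set {set T}}) : {set {perm T}} :=
  [set g : {perm T} | [set (fun x => g x) @: X | X : {set T} in P] == P].

Definition cover_5_2 (n : nat) : {set {set {perm 'I_n}}} :=
  [set H : {set {perm 'I_n}} |
     [|| H == 'Alt_('I_n),
         [exists B : {set 'I_n}, (#|B| == n %/ 2) && (H == partstab [set B; ~: B])]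
       | [exists B : {set 'I_n},
            [&& 1 <= #|B| <= n %/ 3, #|B| != (n %/ 3).-1 & H == setstab B]]]].

(* Main.v *)
Require Import Defs.
From HB Require Import structures.
From mathcomp Require Import all_boot all_fingroup all_solvable.
From mathcomp Require Import zify.
Set Implicit Arguments. Unset Strict Implicit. Unset Printing Implicit Defensive.

Section Orb.
Variables (T : finType) (g : {perm T}).

Lemma porbit_g y : porbit g (g y) = porbit g y.
Proof. by have := porbit_perm g 1 y; rewrite expg1. Qed.

Lemma g_in_porbit y : g y \in porbit g y.
Proof. by have := mem_porbit g 1 y; rewrite expg1. Qed.

Lemma porbit_stab x : [set g y | y in porbit g x] = porbit g x.
Proof.
apply/eqP; rewrite eqEcard card_imset ?leqnn ?andbT; last exact: perm_inj.
apply/subsetP=> _ /imsetP[y Hy ->].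
have /eqP <- : porbit g y == porbit g x by rewrite eq_porbit_mem.
exact: g_in_porbit.
Qed.

Lemma porbit_disj x y : porbit g x != porbit g y -> [disjoint porbit g x & porbit g y].
Proof.
apply: contraR; rewrite -setI_eq0 => /set0Pn [z]; rewrite inE => /andP[zx zy].
have /eqP <- : porbit g z == porbit g x by rewrite eq_porbit_mem.
by rewrite eq_porbit_mem.
Qed.

Lemma partition_porbits : partition (porbits g) [set: T].
Proof.
apply/and3P; split.
- apply/eqP/setP => x; rewrite inE; apply/bigcupP; exists (porbit g x).
    exact: imset_f.
  exact: porbit_id.
- apply/trivIsetP => A B /imsetP[x _ ->] /imsetP[y _ ->]; exact: porbit_disj.
- apply/negP => /imsetP[x _ H]; have := card_porbit_neq0 g x.
  by rewrite -H cards0.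
Qed.

Definition rr y := odflt y [pick z in porbit g y].

Lemma rr_in y : rr y \in porbit g y.
Proof.
rewrite /rr; case: pickP => [z Hz|H] //=; exact: porbit_id.
Qed.

Lemma porbit_rr y : porbit g (rr y) = porbit g y.
Proof. apply/eqP; rewrite eq_porbit_mem; exact: rr_in. Qed.

Lemma rr_g y : rr (g y) = rr y.
Proof.
rewrite /rr porbit_g; case: pickP => [z _|H] //.
by have := H y; rewrite porbit_id.
Qed.

Definition ll y := #|porbit g y|.
Definition tr y := traject g (rr y) (ll y).
Definition idx y := index y (tr y).

Lemma in_tr y : y \in tr y.
Proof.
have := porbit_traject g (rr y); rewrite porbit_rr /tr /ll => <-.
exact: porbit_id.
Qed.

Lemma idx_lt y : idx y < ll y.
Proof. by have := in_tr y; rewrite -index_mem /tr size_traject. Qed.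

Lemma uniq_tr y : uniq (tr y).
Proof. by have := uniq_traject_porbit g (rr y); rewrite porbit_rr. Qed.

Lemma tr_g y : tr (g y) = tr y.
Proof. by rewrite /tr /ll rr_g porbit_g. Qed.

Lemma idx_iter y : iter (idx y) g (rr y) = y.
Proof.
rewrite -(nth_traject _ (idx_lt y)).
by rewrite nth_index //; exact: in_tr.
Qed.

Lemma idx_g y : idx (g y) = if (idx y).+1 < ll y then (idx y).+1 else 0.
Proof.
have Hg : g y = iter (idx y).+1 g (rr y) by rewrite iterS idx_iter.
case: ifP => H.
  rewrite /idx tr_g Hg -[iter _ _ _](nth_traject g H (rr y)) index_uniq //.
    by rewrite size_traject.
  exact: uniq_tr.
have Hl : (idx y).+1 = ll y by have := idx_lt y; lia.
have E : g y = rr y.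
  by rewrite Hg Hl /ll -porbit_rr iter_porbit.
rewrite /idx tr_g E /tr.
have : 0 < ll y by rewrite lt0n card_porbit_neq0.
by case: (ll y) => //= m _; rewrite eqxx.
Qed.

Lemma idx_g_odd y : ~~ odd (ll y) -> odd (idx (g y)) = ~~ odd (idx y).
Proof.
move=> He; rewrite idx_g; case: ifP => H //=.
have Hl : (idx y).+1 = ll y by have := idx_lt y; lia.
by move: He; rewrite -Hl /= negbK => ->.
Qed.

End Orb.

Lemma even_partstab (T : finType) (g : {perm T}) :
  (forall y, ~~ odd (ll g y)) ->
  exists B : {set T}, (#|B|.*2 == #|T|) && (g \in partstab [set B; ~: B]).
Proof.
move=> He; pose B := [set y | odd (idx g y)].
have s1 : [set g y | y in B] \subset ~: B.
  apply/subsetP => _ /imsetP[y Hy ->]; move: Hy; rewrite !inE idx_g_odd //.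
  by move=> ->.
have s2 : [set g y | y in ~: B] \subset B.
  apply/subsetP => _ /imsetP[y Hy ->]; move: Hy; rewrite !inE idx_g_odd //.
have c1 := subset_leq_card s1; have c2 := subset_leq_card s2.
rewrite !(card_imset _ (@perm_inj _ g)) in c1 c2.
have e1 : [set g y | y in B] = ~: B.
  apply/eqP; rewrite eqEcard s1 (card_imset _ (@perm_inj _ g)) /=; lia.
have e2 : [set g y | y in ~: B] = B.
  apply/eqP; rewrite eqEcard s2 (card_imset _ (@perm_inj _ g)) /=; lia.
exists B; apply/andP; split.
  have HC := cardsC B; apply/eqP; lia.
rewrite inE imsetU1 imset_set1 e1 e2; apply/eqP.
by rewrite setUC.
Qed.

Lemma setstab_group (T : finType) (B : {set T}) : group_set (setstab B).
Proof.
apply/group_setP; split.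
  rewrite inE; apply/eqP; rewrite -[RHS]imset_id; apply: eq_imset => x.
  by rewrite perm1.
move=> a b; rewrite !inE => /eqP Ha /eqP Hb.
have -> : [set (a*b)%g x | x in B] = [set b x | x in [set a x | x in B]].
  by rewrite -imset_comp; apply: eq_imset => x; rewrite permM.
by rewrite Ha Hb.
Qed.

Lemma partstab_group (T : finType) (P : {set {set T}}) : group_set (partstab P).
Proof.
apply/group_setP; split.
  rewrite inE; apply/eqP; rewrite -[RHS]imset_id; apply: eq_imset => X.
  rewrite -[RHS]imset_id; apply: eq_imset => x.
  by rewrite perm1.
move=> a b; rewrite !inE => /eqP Ha /eqP Hb.
have -> : [set [set (a*b)%g x | x in X] | X : {set T} in P] =
   [set [set b x | x in X] | X : {set T} in [set [set a x | x in X] | X : {set T} in P]].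
  rewrite -imset_comp; apply: eq_imset => X.
  by rewrite /= -imset_comp; apply: eq_imset => x; rewrite /= permM.
by rewrite Ha Hb.
Qed.

Lemma not_alt_proper n (x y : 'I_n) : x != y -> ('Alt_('I_n))%g \proper [set: {perm 'I_n}].
Proof.
move=> Hxy; rewrite properT; apply/eqP => HA.
have : tperm x y \in ('Alt_('I_n))%g by rewrite HA inE.
by rewrite Alt_even odd_tperm Hxy.
Qed.

Lemma setstab_proper n (B : {set 'I_n}) : 0 < #|B| < n -> setstab B \proper [set: {perm 'I_n}].
Proof.
move=> /andP[h1 h2].
have [x xB] : exists x, x \in B by apply/set0Pn; rewrite -card_gt0.
have [y yB] : exists y, y \in ~: B.
  by apply/set0Pn; rewrite -card_gt0; have := cardsC B; rewrite card_ord; lia.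
rewrite properT; apply/eqP => HA.
have : tperm x y \in setstab B by rewrite HA inE.
rewrite inE => /eqP E.
have : y \in [set tperm x y z | z in B] by apply/imsetP; exists x => //; rewrite tpermL.
by rewrite E => yB'; rewrite inE yB' in yB.
Qed.

Lemma partstab_proper n (B : {set 'I_n}) : 1 < #|B| < n -> partstab [set B; ~: B] \proper [set: {perm 'I_n}].
Proof.
move=> /andP[h1 h2].
have [x xB] : exists x, x \in B by apply/set0Pn; rewrite -card_gt0; lia.
have [x' x'B] : exists x', x' \in B :\ x.
  by apply/set0Pn; rewrite -card_gt0; have := cardsD1 x B; rewrite xB; lia.
have [y yB] : exists y, y \in ~: B.
  by apply/set0Pn; rewrite -card_gt0; have := cardsC B; rewrite card_ord; lia.
rewrite properT; apply/eqP => HA.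
have : tperm x y \in partstab [set B; ~: B] by rewrite HA inE.
rewrite inE => /eqP E.
have : [set tperm x y z | z in B] \in [set B; ~: B].
  rewrite -E; apply: (imset_f (fun X : {set 'I_n} => [set tperm x y z | z in X])).
  by rewrite !inE eqxx.
move: x'B; rewrite !inE => /andP[x'x x'B].
case/orP => /eqP E1.
  have : y \in [set tperm x y z | z in B] by apply/imsetP; exists x => //; rewrite tpermL.
  by rewrite E1 => yB'; rewrite inE yB' in yB.
have : x' \in [set tperm x y z | z in B].
  apply/imsetP; exists x' => //; rewrite tpermD //; first by rewrite eq_sym.
  by apply: contraTneq yB => ->; rewrite inE x'B.
by rewrite E1 inE x'B.
Qed.

Unset Implicit Arguments.
Theorem lemma5p2 (n : nat) (hn : 0 < n) (hmod : n %% 6 = 4) :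
  is_cover [set: {perm 'I_n}] (cover_5_2 n).
Proof.
have n4 : 4 <= n by lia.
rewrite /is_cover; apply/andP; split.
  apply/forall_inP => H; rewrite inE => /or3P[/eqP->|/existsP[B /andP[/eqP cB /eqP->]]|/existsP[B /and3P[/andP[c1 c2] c3 /eqP->]]]; apply/andP; split.
  - exact: groupP.
  - have h0 : 0 < n by lia. have h1 : 1 < n by lia.
    by apply: (@not_alt_proper n (Ordinal h0) (Ordinal h1)).
  - exact: partstab_group.
  - apply: partstab_proper; rewrite cB; apply/andP; split; lia.
  - exact: setstab_group.
  - apply: setstab_proper; apply/andP; split; lia.
rewrite eqEsubset subsetT /=; apply/subsetP => g _; apply/bigcupP.
set t := n %/ 3.
case: (boolP [exists x, (1 <= ll g x <= t) && (ll g x != t.-1)]).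
  case/existsP => x /andP[/andP[l1 l2] l3].
  exists (setstab (porbit g x)); last by rewrite inE porbit_stab.
  rewrite inE; apply/or3P; apply: Or33; apply/existsP; exists (porbit g x).
  by rewrite -/(ll g x) l1 l2 l3 eqxx.
move/existsPn => Hno.
case: (boolP (g \in ('Alt_('I_n))%g)) => Ha.
  by exists ('Alt_('I_n))%g => //; rewrite inE eqxx.
have Hbig : forall y, odd (ll g y) -> t.+2 <= ll g y.
  move=> y Ho; have Hm : ll g y %% 2 = 1 by rewrite modn2 Ho.
  move: (Hno y); rewrite negb_and negb_and -!ltnNge negbK.
  by case/orP => [/orP[h|h]|/eqP h]; lia.
have Hev : forall y, ~~ odd (ll g y).
  move=> y; apply/negP => Ho1.
  have Hy := Hbig y Ho1.
  have Hs := card_partition (partition_porbits g); rewrite cardsT card_ord in Hs.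
  case: (boolP [exists O in porbits g, (O != porbit g y) && odd #|O|]); last first.
    move/exists_inPn => Hno2.
    rewrite (bigD1 (porbit g y)) /= in Hs; last exact: imset_f.
    have Hd : 2 %| n - #|porbit g y|.
      rewrite [in X in X - _]Hs addKn.
      apply: dvdn_sum => A /andP[HA Hne]; rewrite dvdn2.
      by have := Hno2 A HA; rewrite Hne.
    have Hm : ll g y %% 2 = 1 by rewrite modn2 Ho1.
    have Hle : #|porbit g y| <= n by rewrite -[X in _ <= X]card_ord max_card.
    rewrite /ll in Hm. clear Hs. set a := #|porbit g y| in Hd Hle Hm. lia.
  case/exists_inP => _ /imsetP[z _ ->] /andP[Hne Hoz].
  have Hz := Hbig z Hoz.
  have Hdyz : [disjoint porbit g z & porbit g y] by exact: porbit_disj.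
  have Hall : forall w, (porbit g w == porbit g y) || (porbit g w == porbit g z).
    move=> w; apply/negPn/negP => /norP[n1 n2].
    have d1 := porbit_disj n1; have d2 := porbit_disj n2.
    have e1 := cardsUI (porbit g y) (porbit g z).
    have e2 := cardsUI (porbit g w) (porbit g y :|: porbit g z).
    rewrite setIUr in e2.
    move: d1 d2 Hdyz; rewrite -!setI_eq0 => /eqP d1 /eqP d2 /eqP d3.
    rewrite d1 d2 setU0 cards0 in e2; rewrite setIC d3 cards0 in e1.
    have := subset_leq_card (subsetT (porbit g w :|: (porbit g y :|: porbit g z))).
    rewrite cardsT card_ord => Hmax.
    move: (Hno w); rewrite negb_and negb_and -!ltnNge negbK.
    have := card_porbit_neq0 g w; rewrite /ll.
    move=> h0; rewrite /ll in Hy Hz. case/orP => [/orP[h|h]|/eqP h]; lia.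
  have Hp : porbits g = [set porbit g y; porbit g z].
    apply/setP => O; rewrite !inE; apply/imsetP/idP.
      by case=> w _ ->; have := Hall w; rewrite orbC.
    by case/orP => /eqP ->; eexists.
  move: Ha; rewrite Alt_even /odd_perm Hp cards2 eq_sym Hne card_ord.
  have Hodd : odd n = false by apply/negbTE; rewrite -dvdn2; lia.
  by rewrite Hodd.
have [B /andP[/eqP cB Hg]] := even_partstab Hev.
exists (partstab [set B; ~: B]) => //.
rewrite inE; apply/or3P; apply: Or32; apply/existsP; exists B.
rewrite eqxx andbT; rewrite card_ord -mul2n in cB; apply/eqP; lia.
Qed.
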